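(* Let $\mathbb X,\mathbb H,\mathbb Y$ be separable real Hilbert spaces, $\mathbf W\colon\mathbb X\to\mathbb H$ and $\mathbf A\colon\mathbb H\to\mathbb Y$ bounded linear operators, $\mathcal R\colon\mathbb X\to[0,\infty]$ proper, convex and weakly lower semicontinuous, $(\phi_\lambda)_{\lambda\in\Lambda}$ an orthonormal basis of $\mathbb H$ indexed by a countable set $\Lambda$, and $(\kappa_\lambda)_{\lambda\in\Lambda}$ weights with $\kappa_\lambda\ge a>0$. Assume there is $x\in\mathbb X$ with $\mathcal R(x)+\|\mathbf W x\|_{1,\kappa}<\infty$. Suppose $(x_\star,y_\star)\in\mathbb X\times\mathbb Y$ satisfies: (2.1) $\mathbf A\mathbf W x_\star=y_\star$; (2.2) there is $\nu\in\mathbb Y$ with $\mathbf W^*\mathbf A^*\nu\in\partial\big(\mathcal R+\|\mathbf W(\cdot)\|_{1,\kappa}\big)(x_\star)$; (2.3) there exist $\xi\in\partial\mathcal R(x_\star)$ and $\eta\in\partial\|\cdot\|_{1,\kappa}(\mathbf W x_\star)$ with $\mathbf W^*\mathbf A^*\nu=\xi+\mathbf W^*\eta$; (2.4) $\mathbf A_{\Omega[\eta]}\colon\mathbb H_{\Omega[\eta]}\to\mathbb Y$ is injective. Let $C>0$. Then for every $\delta>0$, every $y^\delta\in\mathbb Y$ with $\|y^\delta-y_\star\|\le\delta$, $\alpha=C\delta$, and every minimizer $x_\alpha^\delta$ over $\mathbb X$ of $$\mathcal A_{\alpha,y^\delta}(x)=\tfrac12\|\mathbf A\mathbf W x-y^\delta\|^2+\alpha\big(\mathcal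 R(x)+\|\mathbf W x\|_{1,\kappa}\big),$$ we have $$\mathcal D^{\mathcal R}_\xi(x_\alpha^\delta,x_\star)\le c_{(\nu,\eta)}\,\delta,\qquad \|\mathbf W x_\alpha^\delta-\mathbf W x_\star\|\le d_{(\nu,\eta)}\,\delta,$$ where $$c_{(\nu,\eta)}=\frac{(1+C\|\nu\|)^2}{2C},\qquad d_{(\nu,\eta)}=2\|\mathbf A_{\Omega[\eta]}^{-1}\|\,(1+C\|\nu\|)+\frac{1+\|\mathbf A_{\Omega[\eta]}^{-1}\|\,\|\mathbf A\|}{m[\eta]}\,c_{(\nu,\eta)}.$$
   Context: Weighted $\ell^1$ norm: $\|h\|_{1,\kappa}=\sum_{\lambda\in\Lambda}\kappa_\lambda|\langle\phi_\lambda,h\rangle|\in[0,\infty]$ for $h\in\mathbb H$. Subdifferential: $\xi\in\partial\mathcal F(z_\star)$ iff $\mathcal F(z)\ge\mathcal F(z_\star)+\langle\xi,z-z_\star\rangle$ for all $z$. Bregman distance: for $\xi\in\partial\mathcal F(z_\star)$, $\mathcal D^{\mathcal F}_\xi(z,z_\star)=\mathcal F(z)-\mathcal F(z_\star)-\langle\xi,z-z_\star\rangle$. For $\eta=\sum_\lambda\eta_\lambda\phi_\lambda\in\partial\|\cdot\|_{1,\kappa}(h_\star)$ (which forces $|\eta_\lambda|\le\kappa_\lambda$ for all $\lambda$), set $\Omega[\eta]=\{\lambda\in\Lambda: |\eta_\lambda|=\kappa_\lambda\}$ (a finite set) and $m[\eta]=\min\{\kappa_\lambda-|\eta_\lambda|:\lambda\notin\Omega[\eta]\}>0$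 (with the term involving $1/m[\eta]$ read as $0$ if $\Lambda=\Omega[\eta]$). For finite $\Omega\subseteq\Lambda$: $\mathbb H_\Omega=\operatorname{span}\{\phi_\lambda:\lambda\in\Omega\}$, $\mathbf A_\Omega=\mathbf A|_{\mathbb H_\Omega}\colon\mathbb H_\Omega\to\mathbb Y$, and when $\mathbf A_\Omega$ is injective, $\|\mathbf A_\Omega^{-1}\|$ is the operator norm of its inverse $\operatorname{ran}(\mathbf A_\Omega)\to\mathbb H_\Omega$. *)

(* Defs.v *)
From HB Require Import structures.
From mathcomp Require Import all_boot all_order all_algebra.
From mathcomp Require Import all_classical all_reals all_analysis.
Set Implicit Arguments. Unset Strict Implicit. Unset Printing Implicit Defensive.
Import Order.TTheory GRing.Theory Num.Theory.
Import numFieldNormedType.Exports.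
Local Open Scope classical_set_scope.
Local Open Scope ring_scope.

(* A real inner product inducing the norm of V; together with completeness of
   V (completeNormedModType) this makes V a real Hilbert space. *)
Record is_inner_product (R : realType) (V : normedModType R) (ip : V -> V -> R)
  : Prop := {
  ip_sym : forall x y, ip x y = ip y x;
  ip_linl : forall (a : R) (x y z : V), ip (a *: x + y) z = a * ip x z + ip y z;
  ip_norm : forall x, ip x x = `|x| ^+ 2 }.

Definition separable (R : realType) (V : normedModType R) : Prop :=
  exists S : set V, countable S /\ closure S = setT.

Definition is_adjoint (R : realType) (U V : normedModType R)
  (ipU : U -> U -> R) (ipV : V -> V -> R) (T : U -> V) (Tt : V -> U) : Prop :=
  forall u v, ipV (T u) v = ipU u (Tt v).

Definition weakly_open (R : realType) (V : normedModType R) (ip : V -> V -> R)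
  (U : set V) : Prop :=
  forall x, U x -> exists (n : nat) (ys : nat -> V) (e : R), 0 < e /\
    forall z, (forall i, (i < n)%N -> `|ip (z - x) (ys i)| < e) -> U z.

Definition weakly_closed (R : realType) (V : normedModType R) (ip : V -> V -> R)
  (S : set V) : Prop := weakly_open ip (~` S).

Definition weakly_lsc (R : realType) (V : normedModType R) (ip : V -> V -> R)
  (F : V -> \bar R) : Prop :=
  forall t : \bar R, weakly_closed ip [set x | (F x <= t)%E].

Definition proper_fun (R : realType) (V : normedModType R) (F : V -> \bar R) : Prop :=
  (exists x, (F x < +oo)%E) /\ (forall x, (-oo < F x)%E).

Definition convex_fun (R : realType) (V : normedModType R) (F : V -> \bar R) : Prop :=
  forall (x y : V) (t : R), 0 < t -> t < 1 ->
    (F (t *: x + (1 - t) *: y)%R <= t%:E * F x + (1 - t)%:E * F y)%E.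

Definition subdiff (R : realType) (V : normedModType R) (ip : V -> V -> R)
  (F : V -> \bar R) (x0 xi : V) : Prop :=
  forall z, (F x0 + (ip xi (z - x0)%R)%:E <= F z)%E.

Definition bregman (R : realType) (V : normedModType R) (ip : V -> V -> R)
  (F : V -> \bar R) (xi z z0 : V) : \bar R :=
  (F z - F z0 - (ip xi (z - z0)%R)%:E)%E.

Definition orthonormal_basis (R : realType) (V : normedModType R) (ip : V -> V -> R)
  (L : countType) (phi : L -> V) : Prop :=
  (forall l m, ip (phi l) (phi m) = (if l == m then 1 else 0)) /\
  (forall h, (forall l, ip (phi l) h = 0) -> h = 0).

Definition wl1 (R : realType) (V : normedModType R) (ip : V -> V -> R)
  (L : countType) (phi : L -> V) (kappa : L -> R) (h : V) : \bar R :=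
  \esum_(l in [set: L]) (kappa l * `|ip (phi l) h|)%:E.

Definition Omega (R : realType) (V : normedModType R) (ip : V -> V -> R)
  (L : countType) (phi : L -> V) (kappa : L -> R) (eta : V) : set L :=
  [set l | `|ip (phi l) eta| = kappa l].

(* m[eta] = min { kappa_l - |eta_l| : l notin Omega[eta] } (written as inf) *)
Definition mgap (R : realType) (V : normedModType R) (ip : V -> V -> R)
  (L : countType) (phi : L -> V) (kappa : L -> R) (eta : V) : R :=
  inf [set kappa l - `|ip (phi l) eta| | l in ~` Omega ip phi kappa eta].

(* 1 / m[eta], read as 0 when Lambda = Omega[eta] *)
Definition inv_mgap (R : realType) (V : normedModType R) (ip : V -> V -> R)
  (L : countType) (phi : L -> V) (kappa : L -> R) (eta : V) : R :=
  if pselect (exists l, ~ Omega ip phi kappa eta l)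
  then 1 / mgap ip phi kappa eta else 0.

Definition span_of (R : realType) (V : normedModType R)
  (L : countType) (phi : L -> V) (Om : set L) : set V :=
  [set h | exists (s : seq L) (c : L -> R),
     (forall l, l \in s -> Om l) /\ h = \sum_(l <- s) c l *: phi l].

Definition injective_on (R : realType) (U V : normedModType R) (A : U -> V)
  (S : set U) : Prop :=
  forall h1 h2, S h1 -> S h2 -> A h1 = A h2 -> h1 = h2.

Definition opnorm (R : realType) (U V : normedModType R) (A : U -> V) : R :=
  sup [set `|A h| | h in [set h : U | `|h| <= 1]].

(* operator norm of the inverse of A|_S : S -> A(S), i.e.
   sup { ||A_S^{-1} y|| : y in ran(A_S), ||y|| <= 1 } *)
Definition inv_opnorm (R : realType) (U V : normedModType R) (A : U -> V)
  (S : set U) : R :=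
  sup [set `|h| | h in [set h : U | S h /\ `|A h| <= 1]].

(* Main.v *)
Require Import Defs.
From HB Require Import structures.
From mathcomp Require Import all_boot all_order all_algebra.
From mathcomp Require Import all_classical all_reals all_analysis.
From mathcomp Require Import ring lra.
Import Order.TTheory GRing.Theory Num.Theory.
Import numFieldNormedType.Exports.
Local Open Scope classical_set_scope.
Local Open Scope ring_scope.

Module Helpers.
Set Implicit Arguments. Unset Strict Implicit. Unset Printing Implicit Defensive.

Section IP.
Variables (R : realType) (V : normedModType R) (ip : V -> V -> R).
Hypothesis hip : is_inner_product ip.

Lemma ipDl x y z : ip (x + y) z = ip x z + ip y z.
Proof. by have := ip_linl hip 1 x y z; rewrite scale1r mul1r. Qed.
Lemma ipZl (a : R) x z : ip (a *: x) z = a * ip x z.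
Proof.
have h0 : ip 0 z = 0.
  have := ip_linl hip 1 0 0 z; rewrite scale1r !addr0 mul1r => e.
  by apply: (addrI (ip 0 z)); rewrite addr0 -e.
by have := ip_linl hip a x 0 z; rewrite addr0 h0 addr0.
Qed.
Lemma ip0l z : ip 0 z = 0.
Proof. by rewrite -(scale0r (0:V)) ipZl mul0r. Qed.
Lemma ipNl x z : ip (- x) z = - ip x z.
Proof. by rewrite -scaleN1r ipZl mulN1r. Qed.
Lemma ipBl x y z : ip (x - y) z = ip x z - ip y z.
Proof. by rewrite ipDl ipNl. Qed.
Lemma ipDr x y z : ip z (x + y) = ip z x + ip z y.
Proof. by rewrite !(ip_sym hip z) ipDl. Qed.
Lemma ipZr (a : R) x z : ip z (a *: x) = a * ip z x.
Proof. by rewrite !(ip_sym hip z) ipZl. Qed.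
Lemma ip0r z : ip z 0 = 0.
Proof. by rewrite (ip_sym hip) ip0l. Qed.
Lemma ipNr x z : ip z (- x) = - ip z x.
Proof. by rewrite !(ip_sym hip z) ipNl. Qed.
Lemma ipBr x y z : ip z (x - y) = ip z x - ip z y.
Proof. by rewrite ipDr ipNr. Qed.
Lemma ip_suml (I : Type) (s : seq I) (P : pred I) (F : I -> V) z :
  ip (\sum_(i <- s | P i) F i) z = \sum_(i <- s | P i) ip (F i) z.
Proof.
elim: s => [|i s IH]; first by rewrite !big_nil ip0l.
by rewrite !big_cons; case: (P i); rewrite ?ipDl IH.
Qed.
Lemma ip_sumr (I : Type) (s : seq I) (P : pred I) (F : I -> V) z :
  ip z (\sum_(i <- s | P i) F i) = \sum_(i <- s | P i) ip z (F i).
Proof. by rewrite (ip_sym hip) ip_suml; apply: eq_bigr => i _; rewrite ip_sym. Qed.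

Lemma ip_CS x y : `|ip x y| <= `|x| * `|y|.
Proof.
have [->|y0] := eqVneq y 0; first by rewrite ip0r normr0 normr0 mulr0.
have ny : 0 < `|y| ^+ 2 by rewrite exprn_gt0 // normr_gt0.
set t := - (ip x y / `|y| ^+ 2).
have := ip_norm hip (x + t *: y).
rewrite ipDl !ipDr !ipZl !ipZr.
  rewrite (ip_sym hip y x).
  rewrite !(ip_norm hip).
  move=> e.
have h : 0 <= `|x| ^+ 2 - ip x y ^+ 2 / `|y| ^+ 2.
  have -> : `|x| ^+ 2 - ip x y ^+ 2 / `|y| ^+ 2 = `|x + t *: y| ^+ 2.
    by rewrite -e /t; field; rewrite normr_eq0.
  exact: sqr_ge0.
have h2 : ip x y ^+ 2 <= (`|x| * `|y|) ^+ 2.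
  rewrite exprMn -subr_ge0.
  have -> : `|x| ^+ 2 * `|y| ^+ 2 - ip x y ^+ 2 = (`|x| ^+ 2 - ip x y ^+ 2 / `|y| ^+ 2) * `|y| ^+ 2.
    by field; rewrite normr_eq0.
  by rewrite mulr_ge0 // ltW.
by rewrite -(ler_pXn2r (_ : 0 < 2)%N) ?nnegrE ?mulr_ge0 // real_normK ?num_real.
Qed.
End IP.

Section ONB.
Variables (R : realType) (V : normedModType R) (ip : V -> V -> R).
Hypothesis hip : is_inner_product ip.
Variables (L : countType) (phi : L -> V).
Hypothesis onb : orthonormal_basis ip phi.

Lemma phi_ip l m : ip (phi l) (phi m) = (if l == m then 1 else 0).
Proof. by case: onb => h _; apply: h. Qed.

Lemma phi_coef_sum_notin (s : seq L) (c : L -> R) m : m \notin s ->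
  ip (phi m) (\sum_(l <- s) c l *: phi l) = 0.
Proof.
elim: s => [|l s IH]; first by rewrite big_nil (ip0r hip).
rewrite in_cons negb_or => /andP[ml ms].
by rewrite big_cons (ipDr hip) (ipZr hip) phi_ip (negbTE ml) mulr0 IH // add0r.
Qed.

Lemma phi_coef_sum (s : seq L) (c : L -> R) m : uniq s ->
  ip (phi m) (\sum_(l <- s) c l *: phi l) = if m \in s then c m else 0.
Proof.
elim: s => [|l s IH]; first by rewrite big_nil (ip0r hip).
move=> /= /andP[ls us]; rewrite big_cons (ipDr hip) (ipZr hip) phi_ip in_cons IH //.
have [->|ml] := eqVneq m l; first by rewrite mulr1 (negbTE ls) addr0.
by rewrite mulr0 add0r.
Qed.

Lemma onb_ext v w : (forall l, ip (phi l) v = ip (phi l) w) -> v = w.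
Proof.
move=> h; apply/eqP; rewrite -subr_eq0; apply/eqP.
case: onb => _; apply => l; by rewrite (ipBr hip) h subrr.
Qed.

Lemma bessel (s : seq L) x : uniq s ->
  \sum_(l <- s) ip (phi l) x ^+ 2 <= `|x| ^+ 2.
Proof.
move=> us; set p := \sum_(l <- s) ip (phi l) x *: phi l.
have e1 : ip x p = \sum_(l <- s) ip (phi l) x ^+ 2.
  rewrite /p (ip_sumr hip); apply: eq_bigr => l _.
  by rewrite (ipZr hip) (ip_sym hip) expr2.
have e2 : ip p p = \sum_(l <- s) ip (phi l) x ^+ 2.
  rewrite {1}/p (ip_suml hip) big_seq [RHS]big_seq; apply: eq_bigr => l ls.
  by rewrite (ipZl hip) /p phi_coef_sum // ls expr2.
have := ip_norm hip (x - p).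
rewrite (ipBl hip) !(ipBr hip) (ip_sym hip p x) e1 e2 (ip_norm hip) => e.
have : 0 <= `|x - p| ^+ 2 by apply: sqr_ge0.
rewrite -e; lra.
Qed.

Lemma onb_finite x (eps : R) : 0 < eps ->
  exists s : seq L, uniq s /\ forall l, eps <= `|ip (phi l) x| -> l \in s.
Proof.
move=> e0.
pose P := fun n : nat => `[< exists s : seq L, [/\ uniq s, size s = n &
   forall l, l \in s -> eps <= `|ip (phi l) x| ] >].
have P0 : exists n, P n by exists 0%N; apply/asboolP; exists [::].
have ub : forall n, P n -> (n <= Num.bound (`|x| ^+ 2 / eps ^+ 2))%N.
  move=> n /asboolP [s [us <- hs]].
  have hb := bessel x us.
  have : (size s)%:R * eps ^+ 2 <= `|x| ^+ 2.
    apply: le_trans hb.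
    rewrite -sum1_size natr_sum mulr_suml.
    rewrite big_seq [X in _ <= X]big_seq; apply: ler_sum => l ls.
    rewrite mul1r -[X in _ <= X]real_normK ?num_real //.
    by rewrite ler_pXn2r ?nnegrE ?(ltW e0) ?normr_ge0 ?hs.
  move=> h; rewrite -(ler_nat R); apply: ltW.
  apply: le_lt_trans (archi_boundP _); last by rewrite divr_ge0 // sqr_ge0.
  by rewrite ler_pdivlMr ?exprn_gt0.
case: (ex_maxnP P0 ub) => n /asboolP [s [us sz hs]] mx.
exists s; split => // l hl; case ls: (l \in s) => //.
have : P (size (l :: s)).
  apply/asboolP; exists (l :: s); split => //=; first by rewrite ls.
  by move=> m; rewrite in_cons => /orP [/eqP -> | /hs].
by move/mx; rewrite /= sz ltnn.
Qed.

Lemma norm_phi l : `|phi l| = 1.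
Proof.
have := ip_norm hip (phi l); rewrite phi_ip eqxx => /esym/eqP.
rewrite -[X in _ == X](expr1n _ 2%N) eqrXn2 ?ler01 //; by move/eqP.
Qed.
End ONB.

Section L1.
Variables (R : realType) (V : completeNormedModType R) (ip : V -> V -> R).
Hypothesis hip : is_inner_product ip.
Variables (L : countType) (phi : L -> V).
Hypothesis onb : orthonormal_basis ip phi.



Lemma l1_bound g (E : R) :
  (forall s : seq L, uniq s -> \sum_(l <- s) `|ip (phi l) g| <= E) ->
  `|g| <= E.
Proof.
move=> hE.
pose c l := ip (phi l) g.
pose t : nat -> V := fun k => oapp (fun l => c l *: phi l) 0 (@pickle_inv L k).
pose sn n := pmap (@pickle_inv L) (iota 0 n).
have usn n : uniq (sn n) by apply: (pmap_uniq (@pickle_invK L)); apply: iota_uniq.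
have St n : series t n = \sum_(l <- sn n) c l *: phi l.
  by rewrite /series /= /sn big_pmap /index_iota subn0.
have Nt n : [normed series t] n = \sum_(l <- sn n) `|c l|.
  rewrite /= /sn big_pmap /series /= /index_iota subn0; apply: eq_bigr => k _; rewrite /t.
  by case: (pickle_inv k) => [l|] /=; rewrite ?normr0 // normrZ (norm_phi hip onb) mulr1.
have Nle n : [normed series t] n <= E by rewrite Nt; apply: hE.
have ncvg : cvgn [normed series t].
  apply: nondecreasing_is_cvgn.
    by apply: nondecreasing_series => n _ _; apply: normr_ge0.
  by exists E => _ [n _ <-].
have scvg := normed_cvg ncvg.
set g' := limn (series t).
have hg' : `|g'| <= E.
  apply: le_trans (lim_series_norm ncvg) _.
  by apply: limr_le => //; near=> n; apply: Nle.
suff -> : g = g' by [].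
apply: (onb_ext hip onb) => m.
have h1 : (fun n => ip (phi m) (series t n)) @ \oo --> ip (phi m) g'.
  apply/cvgrPdist_lt => e e0.
  have scvg' : series t @ \oo --> g' by exact: scvg.
  have := (cvgrPdist_lt _ _).1 scvg' e e0.
  move=> hn0; near=> n.
  have hn : `|g' - series t n| < e.
    by near: n; exact: hn0.
  rewrite -(ipBr hip); apply: le_lt_trans hn.
  by apply: le_trans (ip_CS hip _ _) _; rewrite (norm_phi hip onb) mul1r.
have h2 : (fun n => ip (phi m) (series t n)) @ \oo --> c m.
  apply: cvg_near_cst; near=> n.
  rewrite St (phi_coef_sum hip onb) //.
  suff -> : m \in sn n by [].
  rewrite (can2_mem_pmap (@pickle_invK L) (@pickleK_inv L)).
  rewrite mem_iota add0n /=; near: n; exists (pickle m).+1 => // k.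
exact: (cvg_unique _ h2 h1).
Unshelve. all: by end_near. Qed.
End L1.

Section Gram.
Variables (R : realType) (Y : normedModType R) (ip : Y -> Y -> R).
Hypothesis hip : is_inner_product ip.

Lemma gram_bound (k : nat) (w : 'I_k -> Y) :
  (forall c : 'I_k -> R, \sum_i c i *: w i = 0 -> forall i, c i = 0) ->
  exists K : R, forall c : 'I_k -> R,
    \sum_i `|c i| <= K * `|\sum_i c i *: w i|.
Proof.
move=> hinj.
pose G : 'M[R]_k := \matrix_(i, j) ip (w i) (w j).
have vG (v : 'rV[R]_k) j : (v *m G) 0 j = ip (\sum_i v 0 i *: w i) (w j).
  rewrite mxE (ip_suml hip); apply: eq_bigr => i _.
  by rewrite mxE (ipZl hip).
have ker (v : 'rV[R]_k) : v *m G = 0 -> v = 0.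
  move=> h0.
  have z0 : \sum_i v 0 i *: w i = 0.
    have : ip (\sum_i v 0 i *: w i) (\sum_i v 0 i *: w i) = 0.
      rewrite (ip_sumr hip) big1 // => j _.
      by rewrite (ipZr hip) -vG h0 mxE mulr0.
    rewrite (ip_norm hip) => /eqP; rewrite sqrf_eq0 normr_eq0 => /eqP //.
  apply/rowP => i; rewrite mxE.
  have := hinj (fun i => v 0 i) z0 i.
  by [].
have uG : G \in unitmx.
  rewrite -row_free_unit -kermx_eq0; apply/eqP/row_matrixP => i.
  rewrite row0; apply: ker.
  by rewrite -row_mul mulmx_ker row0.
pose K := \sum_i \sum_j `|w j| * `|invmx G j i|.
exists K => c.
set z := \sum_i c i *: w i.
pose v : 'rV[R]_k := \row_i c i.
have hv : v = (v *m G) *m invmx G by rewrite mulmxK.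
have zv : \sum_i v 0 i *: w i = z.
  by apply: eq_bigr => i _; rewrite mxE.
rewrite /K mulr_suml; apply: ler_sum => i _.
have -> : c i = v 0 i by rewrite mxE.
rewrite hv mxE mulr_suml; apply: le_trans (ler_norm_sum _ _ _) _.
apply: ler_sum => j _.
rewrite normrM vG zv mulrAC; apply: ler_wpM2r => //.
by rewrite mulrC; apply: ip_CS.
Qed.
End Gram.

Section GramSeq.
Variables (R : realType) (Y : normedModType R) (ip : Y -> Y -> R).
Hypothesis hip : is_inner_product ip.

Lemma gram_bound_seq (I : eqType) (s : seq I) (w : I -> Y) : uniq s ->
  (forall c : I -> R, \sum_(l <- s) c l *: w l = 0 -> forall l, l \in s -> c l = 0) ->
  exists K : R, forall c : I -> R,
    \sum_(l <- s) `|c l| <= K * `|\sum_(l <- s) c l *: w l|.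
Proof.
move=> us hinj.
pose t := tnth (in_tuple s).
have tinj i j : (t i == t j) = (i == j).
  have x0 : I := t i.
  by rewrite /t !(tnth_nth x0) /= nth_uniq.
have [|K hK] := @gram_bound R Y ip hip (size s) (fun i => w (t i)).
  move=> c hc i.
  pose c' l := \sum_(j | t j == l) c j.
  have c't j : c' (t j) = c j.
    by rewrite /c' (eq_bigl (fun i => i == j)) ?big_pred1_eq // => k; rewrite tinj.
  have : \sum_(l <- s) c' l *: w l = 0.
    rewrite big_tnth; rewrite -[RHS]hc; apply: eq_bigr => j _.
    by rewrite -/t c't.
  move/hinj => /(_ (t i)); rewrite c't; apply.
  by rewrite /t mem_tnth.
exists K => c.
rewrite [\sum_(l <- s) `|c l|]big_tnth [\sum_(l <- s) c l *: w l]big_tnth.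
exact: hK.
Qed.
End GramSeq.

Section WL1.
Variables (R : realType) (H : normedModType R) (ip : H -> H -> R).
Hypothesis hip : is_inner_product ip.
Variables (L : countType) (phi : L -> H).
Hypothesis onb : orthonormal_basis ip phi.
Variables (kappa : L -> R) (a : R).
Hypotheses (a_gt0 : 0 < a) (kappa_ge : forall l, a <= kappa l).
Local Notation wl := (wl1 ip phi kappa).

Lemma kappa_gt0 l : 0 < kappa l.
Proof. exact: lt_le_trans a_gt0 (kappa_ge l). Qed.

Lemma wl1_ge0 z : (0 <= wl z)%E.
Proof.
apply: esum_ge0 => l _; rewrite lee_fin mulr_ge0 //.
exact: ltW (kappa_gt0 l).
Qed.

Lemma wl1_0 : wl 0 = 0%E.
Proof. by apply: esum1 => l _; rewrite (ip0r hip) normr0 mulr0. Qed.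

Lemma wl1_split z s : uniq s -> wl z =
  (\esum_(l in ~` [set` s]) (kappa l * `|ip (phi l) z|)%:E
   + (\sum_(l <- s) kappa l * `|ip (phi l) z|)%:E)%E.
Proof.
move=> us; rewrite /wl1 (esumID [set` s]); last first.
  by move=> l _; rewrite lee_fin mulr_ge0 // ltW // kappa_gt0.
rewrite !setTI addeC; congr (_ + _)%E.
rewrite esum_fset; last 2 first.
- exact: finite_seq.
- by move=> l _; rewrite lee_fin mulr_ge0 // ltW // kappa_gt0.
by rewrite -fsbig_seq // sumEFin.
Qed.

Lemma wl1_change z z' s : uniq s ->
  (forall l, l \notin s -> ip (phi l) z = ip (phi l) z') ->
  wl z \is a fin_num ->
  wl z' = (fine (wl z) - \sum_(l <- s) kappa l * `|ip (phi l) z|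
           + \sum_(l <- s) kappa l * `|ip (phi l) z'|)%:E.
Proof.
move=> us hz; rewrite (wl1_split z us) (wl1_split z' us).
have -> : \esum_(l in ~` [set` s]) (kappa l * `|ip (phi l) z'|)%:E =
          \esum_(l in ~` [set` s]) (kappa l * `|ip (phi l) z|)%:E.
  apply: eq_esum => l /= ls; rewrite hz //; apply/negP => ls'; exact: ls.
set E := esum _ _ => fin.
have fE : E \is a fin_num by move: fin; rewrite fin_numD => /andP[].
rewrite -(fineK fE) -!EFinD /=; congr (_%:E); ring.
Qed.

Lemma subdiff_fin u0 eta : subdiff ip wl u0 eta -> wl u0 \is a fin_num.
Proof.
move=> h; have := h 0; rewrite wl1_0 => h0.
move: h0 (wl1_ge0 u0); case: (wl u0) => //.
Qed.

Lemma subgrad_coord u0 eta u s (d : L -> R) : subdiff ip wl u0 eta -> uniq s ->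
  wl u \is a fin_num ->
  fine (wl u0) + ip eta (u - u0) + \sum_(l <- s) d l * ip (phi l) eta <=
  fine (wl u) + \sum_(l <- s) kappa l * (`|ip (phi l) u + d l| - `|ip (phi l) u|).
Proof.
move=> hs us fu.
have f0 := subdiff_fin hs.
set z := u + \sum_(l <- s) d l *: phi l.
have hz : forall l, l \notin s -> ip (phi l) u = ip (phi l) z.
  by move=> l ls; rewrite /z (ipDr hip) (phi_coef_sum_notin hip onb) // addr0.
have := hs z; rewrite (wl1_change us hz fu) -(fineK f0) -EFinD lee_fin.
have -> : ip eta (z - u0) = ip eta (u - u0) + \sum_(l <- s) d l * ip (phi l) eta.
  rewrite /z addrAC [LHS](ipDr hip) (ip_sumr hip); congr (_ + _).
  by apply: eq_bigr => l _; rewrite (ipZr hip) (ip_sym hip).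
move=> h; rewrite addrA in h; apply: le_trans h _.
rewrite -addrA lerD2l addrC -sumrB big_seq [leRHS]big_seq.
apply: ler_sum => l ls; rewrite /z (ipDr hip) (phi_coef_sum hip onb) // ls.
by rewrite mulrBr.
Qed.
End WL1.

Section Coord.
Variables (R : realType) (H : normedModType R) (ip : H -> H -> R).
Hypothesis hip : is_inner_product ip.
Variables (L : countType) (phi : L -> H).
Hypothesis onb : orthonormal_basis ip phi.
Variables (kappa : L -> R) (a : R).
Hypotheses (a_gt0 : 0 < a) (kappa_ge : forall l, a <= kappa l).
Variables (us eta : H).
Hypothesis hsub : subdiff ip (wl1 ip phi kappa) us eta.
Local Notation wl := (wl1 ip phi kappa).
Local Notation Om := (Omega ip phi kappa eta).
Local Notation et l := (ip (phi l) eta).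

Lemma eta_le l : `|et l| <= kappa l.
Proof.
have fu := subdiff_fin hip a_gt0 kappa_ge hsub.
have := subgrad_coord hip onb a_gt0 kappa_ge (u := us) (s := [:: l]) (fun _ => et l) hsub isT fu.
rewrite subrr (ip0r hip) addr0 !big_cons !big_nil !addr0 lerD2l => h.
have k0 := kappa_gt0 a_gt0 kappa_ge l.
have h2 : `|et l| ^+ 2 <= kappa l * `|et l|.
  rewrite real_normK ?num_real // expr2; apply: le_trans h _.
  apply: ler_wpM2l; first exact: ltW.
  rewrite lerBlDl; exact: ler_normD.
have := normr_ge0 (et l); nra.
Qed.

Lemma us_zero l : ~ Om l -> ip (phi l) us = 0.
Proof.
move=> nO; have fu := subdiff_fin hip a_gt0 kappa_ge hsub.
have := subgrad_coord hip onb a_gt0 kappa_ge (u := us) (s := [:: l]) (fun _ => - ip (phi l) us) hsub isT fu.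
rewrite subrr (ip0r hip) addr0 !big_cons !big_nil !addr0 lerD2l subrr normr0 sub0r.
move=> h.
have lt : `|et l| < kappa l.
  by rewrite lt_neqAle eta_le andbT; apply/eqP.
have h2 : kappa l * `|ip (phi l) us| <= `|ip (phi l) us| * `|et l|.
  rewrite -normrM; apply: le_trans (ler_norm _); lra.
apply/normr0_eq0; apply/le_anti/andP; split => //.
have := normr_ge0 (ip (phi l) us); have := normr_ge0 (et l); nra.
Qed.

Lemma D2_bound ux s : uniq s -> (forall l, l \in s -> ~ Om l) ->
  wl ux \is a fin_num ->
  \sum_(l <- s) (kappa l - `|et l|) * `|ip (phi l) ux| <=
  fine (wl ux) - fine (wl us) - ip eta (ux - us).
Proof.
move=> uq hs fx.
have := subgrad_coord hip onb a_gt0 kappa_ge (u := ux) (fun l => - ip (phi l) ux) hsub uq fx.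
move=> h.
have e1 : \sum_(l <- s) kappa l * (`|ip (phi l) ux + - ip (phi l) ux| - `|ip (phi l) ux|)
   = - \sum_(l <- s) kappa l * `|ip (phi l) ux|.
  rewrite -sumrN; apply: eq_bigr => l _; by rewrite subrr normr0 sub0r mulrN.
rewrite e1 in h.
have e2 : \sum_(l <- s) - ip (phi l) ux * et l = - \sum_(l <- s) ip (phi l) ux * et l.
  by rewrite -sumrN; apply: eq_bigr => l _; rewrite mulNr.
rewrite e2 in h.
have h3 : \sum_(l <- s) (kappa l - `|et l|) * `|ip (phi l) ux| <=
   \sum_(l <- s) kappa l * `|ip (phi l) ux| - \sum_(l <- s) ip (phi l) ux * et l.
  rewrite -sumrB; apply: ler_sum => l _.
  rewrite mulrBl lerD2l lerN2; apply: le_trans (ler_norm _) _.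
  by rewrite normrM mulrC.
apply: le_trans h3 _; lra.
Qed.

Lemma gap_pos l : ~ Om l -> 0 < kappa l - `|et l|.
Proof.
move=> nO; rewrite subr_gt0 lt_neqAle eta_le andbT; apply/eqP => e.
by apply: nO; rewrite /Omega /= e.
Qed.

Lemma Om_seq : exists sO : seq L, uniq sO /\ forall l, Om l <-> l \in sO.
Proof.
have [s [uqs hs]] := onb_finite hip onb eta a_gt0.
exists [seq l <- s | `[< Om l >]]; split; first exact: filter_uniq.
move=> l; rewrite mem_filter; split.
  move=> hO; apply/andP; split; first exact/asboolP.
  by apply: hs; rewrite hO.
by move=> /andP[/asboolP].
Qed.

Lemma mgap_prop : (exists l, ~ Om l) ->
  (0 < mgap ip phi kappa eta) /\
  (forall l, ~ Om l -> mgap ip phi kappa eta <= kappa l - `|et l|).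
Proof.
move=> [l0 nl0].
have a2 : 0 < a / 2 by rewrite divr_gt0.
have [s [_ hs]] := onb_finite hip onb eta a2.
have [e [e0 he]] : exists e, 0 < e /\ forall l, l \in s -> ~ Om l -> e <= kappa l - `|et l|.
  elim: s {hs} => [|l s [e [e0 he]]]; first by exists 1.
  case: (pselect (Om l)) => hl.
    exists e; split => // m; rewrite in_cons => /orP [/eqP -> //| ]; exact: he.
  exists (Num.min e (kappa l - `|et l|)); split; first by rewrite lt_min e0 gap_pos.
  move=> m; rewrite in_cons => /orP [/eqP -> _ | ms nm]; first by rewrite ge_min lexx orbT.
  by rewrite ge_min he.
set e' := Num.min e (a / 2).
have e'0 : 0 < e' by rewrite lt_min e0 a2.
have lb : lbound [set kappa l - `|et l| | l in ~` Om] e'.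
  move=> _ [l nl <-].
  case ls: (l \in s).
    by rewrite ge_min he.
  rewrite ge_min; apply/orP; right.
  have : ~ (a / 2 <= `|et l|) by move=> /hs; rewrite ls.
  move/negP; rewrite -ltNge => h.
  have := kappa_ge l; lra.
split.
  apply: lt_le_trans e'0 _; apply: lb_le_inf => //.
  by exists (kappa l0 - `|et l0|), l0.
move=> l nl; apply: ge_inf; last by exists l.
by exists e'.
Qed.
End Coord.

Section Opnorm.
Variables (R : realType) (U V : normedModType R) (A : {linear U -> V}).
Hypothesis Acont : continuous A.

Lemma opnorm_bound : 0 <= opnorm A /\ forall g, `|A g| <= opnorm A * `|g|.
Proof.
have /linear_boundedP /pinfty_ex_gt0 [r r0 hr] := (linear_bounded_continuous A).2 Acont.
set S := [set `|A h| | h in [set h : U | `|h| <= 1]].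
have ubS : has_ubound S.
  exists r => _ [h /= h1 <-]; apply: le_trans (hr h) _.
  by rewrite -[leRHS]mulr1 ler_wpM2l // ltW.
have inS h : `|h| <= 1 -> `|A h| <= opnorm A.
  by move=> h1; apply: ub_le_sup => //; exists h.
split.
  apply: le_trans (inS 0 _); rewrite ?raddf0 ?normr0 //.
move=> g; have [->|g0] := eqVneq g 0; first by rewrite linear0 !normr0 mulr0.
have ng : 0 < `|g| by rewrite normr_gt0.
have := inS (`|g|^-1 *: g).
rewrite linearZ !normrZ ger0_norm ?invr_ge0 ?normr_ge0 // mulVf ?gt_eqF // lexx.
move=> /(_ isT); rewrite ler_pdivrMl // => h.
by rewrite mulrC.
Qed.
End Opnorm.

Section Span.
Variables (R : realType) (H Y : normedModType R) (ip : H -> H -> R).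
Hypothesis hip : is_inner_product ip.
Variables (ipY : Y -> Y -> R).
Hypothesis hipY : is_inner_product ipY.
Variables (L : countType) (phi : L -> H).
Hypothesis onb : orthonormal_basis ip phi.
Variables (A : {linear H -> Y}) (Om : set L) (sO : seq L).
Hypotheses (usO : uniq sO) (hsO : forall l, Om l <-> l \in sO).
Hypothesis Ainj : injective_on A (span_of phi Om).

Lemma span0 : span_of phi Om 0.
Proof. by exists [::], (fun _ => 0); rewrite big_nil. Qed.

Lemma spanZ (r : R) v : span_of phi Om v -> span_of phi Om (r *: v).
Proof.
move=> [s [c [hs ->]]]; exists s, (fun l => r * c l); split => //.
by rewrite scaler_sumr; apply: eq_bigr => l _; rewrite scalerA.
Qed.

Lemma span_repr v : span_of phi Om v -> v = \sum_(l <- sO) ip (phi l) v *: phi l.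
Proof.
move=> hv; apply: (onb_ext hip onb) => m.
rewrite (phi_coef_sum hip onb) //; case: ifP => // mO.
move: hv => [s [c [hs ->]]]; apply: (phi_coef_sum_notin hip onb).
by apply/negP => /hs /hsO; rewrite mO.
Qed.

Lemma A_inj0 v : span_of phi Om v -> A v = 0 -> v = 0.
Proof. by move=> hv Av; apply: Ainj => //; [exact: span0 | rewrite linear0]. Qed.

Lemma inv_bound_ex : exists K : R, forall v, span_of phi Om v -> `|v| <= K * `|A v|.
Proof.
have [|K hK] := @gram_bound_seq _ _ _ hipY _ sO (fun l => A (phi l)) usO.
  move=> c hc l ls.
  set p := \sum_(l <- sO) c l *: phi l.
  have hp : span_of phi Om p by exists sO, c; split => // m /hsO.
  have Ap : A p = 0 by rewrite /p linear_sum -[RHS]hc; apply: eq_bigr => m _; rewrite linearZ.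
  have := A_inj0 hp Ap => /(congr1 (ip (phi l))).
  by rewrite (ip0r hip) /p (phi_coef_sum hip onb) // ls.
exists K => v hv.
rewrite {1}(span_repr hv).
apply: le_trans (ler_norm_sum _ _ _) _.
have -> : \sum_(l <- sO) `|ip (phi l) v *: phi l| = \sum_(l <- sO) `|ip (phi l) v|.
  by apply: eq_bigr => l _; rewrite normrZ (norm_phi hip onb) mulr1.
apply: le_trans (hK _) _.
have -> : A v = \sum_(l <- sO) ip (phi l) v *: A (phi l).
  rewrite [in LHS](span_repr hv) linear_sum; apply: eq_bigr => l _.
  by rewrite linearZ.
by [].
Qed.

Lemma inv_opnorm_prop :
  0 <= inv_opnorm A (span_of phi Om) /\
  forall v, span_of phi Om v -> `|v| <= inv_opnorm A (span_of phi Om) * `|A v|.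
Proof.
have [K hK] := inv_bound_ex.
set S := [set `|h| | h in [set h : H | span_of phi Om h /\ `|A h| <= 1]].
have ubS : has_ubound S.
  exists (Num.max K 0) => _ [h /= [sh h1] <-]; apply: le_trans (hK h sh) _.
  have := normr_ge0 (A h).
  by case: (lerP K 0) => hk0; rewrite ?max_r ?max_l ?(ltW hk0) //; nra.
have inS h : span_of phi Om h -> `|A h| <= 1 -> `|h| <= inv_opnorm A (span_of phi Om).
  by move=> sh h1; apply: ub_le_sup => //; exists h.
split.
  by apply: le_trans (inS 0 span0 _); rewrite ?raddf0 ?normr0.
move=> v hv; have [Av0|Av] := eqVneq (A v) 0.
  by rewrite Av0 (A_inj0 hv Av0) !normr0 mulr0.
have nA : 0 < `|A v| by rewrite normr_gt0.
have := inS (`|A v|^-1 *: v) (spanZ _ hv).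
rewrite linearZ !normrZ ger0_norm ?invr_ge0 ?normr_ge0 // mulVf ?gt_eqF // lexx.
move=> /(_ isT); rewrite ler_pdivrMl // => h.
by rewrite mulrC.
Qed.
End Span.

Lemma key_ineq (R : realType) (C de n r D : R) : 0 < C -> 0 < de -> 0 <= n -> 0 <= r ->
  0 <= D -> 2^-1 * r ^+ 2 + C * de * D <= 2^-1 * de ^+ 2 + C * de * n * (r + de) ->
  D <= (1 + C * n) ^+ 2 / (2 * C) * de /\ r <= de * (1 + 2 * C * n).
Proof.
move=> C0 d0 n0 r0 D0 h.
have al0 : 0 < C * de by rewrite mulr_gt0.
have h1 : C * de * D <= 2^-1 * (de + C * de * n) ^+ 2.
  have : 0 <= 2^-1 * (r - C * de * n) ^+ 2 by rewrite mulr_ge0 ?invr_ge0 ?sqr_ge0.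
  move: h; set a := C * de; set b := 2^-1.
  have hb : b * 2 = 1 by rewrite /b mulVf.
  move=> h h2; nra.
split.
  rewrite -(ler_pM2l al0); apply: le_trans h1 _.
  rewrite le_eqVlt; apply/orP; left; apply/eqP; field; by rewrite gt_eqF.
have h2 : (r - C * de * n) ^+ 2 <= (de + C * de * n) ^+ 2.
  move: h; set a := C * de; set b := 2^-1.
  have hb : b * 2 = 1 by rewrite /b mulVf.
  have : 0 <= a * D by exact: mulr_ge0 (ltW al0) D0.
  move=> h3 h; nra.
have s0 : 0 <= de + C * de * n.
  by apply: addr_ge0; [exact: ltW | apply: mulr_ge0 => //; exact: ltW].
have : r - C * de * n <= de + C * de * n.
  case: (lerP (r - C * de * n) 0) => ht; first by apply: le_trans ht s0.
  by rewrite -(ler_pXn2r (_ : 0 < 2)%N) ?nnegrE // ltW.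
lra.
Qed.


Lemma fin_of_le (R : realType) (x y k : R) (e : \bar R) : 0 < k -> (0 <= e)%E ->
  (x%:E + k%:E * e <= y%:E)%E -> e \is a fin_num.
Proof.
move=> k0; case: e => // _; rewrite mulry gtr0_sg // mul1e addey //.
Qed.

Lemma fin_sum_ge0 (R : realType) (e1 e2 : \bar R) : (0 <= e1)%E -> (0 <= e2)%E ->
  (e1 + e2 < +oo)%E -> e1 \is a fin_num /\ e2 \is a fin_num.
Proof.
by case: e1 => [r1| |] //; case: e2 => [r2| |].
Qed.

End Helpers.
Import Helpers.

Theorem mainTheorem2 (R : realType)
  (X H Y : completeNormedModType R)
  (ipX : X -> X -> R) (ipH : H -> H -> R) (ipY : Y -> Y -> R)
  (hipX : is_inner_product ipX) (hipH : is_inner_product ipH)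
  (hipY : is_inner_product ipY)
  (sepX : separable X) (sepH : separable H) (sepY : separable Y)
  (W : {linear X -> H}) (A : {linear H -> Y})
  (Wcont : continuous W) (Acont : continuous A)
  (Wt : H -> X) (At : Y -> H)
  (hWt : is_adjoint ipX ipH W Wt) (hAt : is_adjoint ipH ipY A At)
  (Reg : X -> \bar R)
  (Reg_ge0 : forall x, (0 <= Reg x)%E)
  (Reg_proper : proper_fun Reg) (Reg_convex : convex_fun Reg)
  (Reg_wlsc : weakly_lsc ipX Reg)
  (L : countType) (phi : L -> H) (onb : orthonormal_basis ipH phi)
  (kappa : L -> R) (a : R) (a_gt0 : 0 < a) (kappa_ge : forall l, a <= kappa l)
  (dom_nonempty : exists x, (Reg x + wl1 ipH phi kappa (W x) < +oo)%E)
  (xs : X) (ys : Y) (nu : Y) (xi : X) (eta : H)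
  (h21 : A (W xs) = ys)
  (h22 : subdiff ipX (fun x => Reg x + wl1 ipH phi kappa (W x))%E xs (Wt (At nu)))
  (h23a : subdiff ipX Reg xs xi)
  (h23b : subdiff ipH (wl1 ipH phi kappa) (W xs) eta)
  (h23c : Wt (At nu) = xi + Wt eta)
  (h24 : injective_on A (span_of phi (Omega ipH phi kappa eta)))
  (C : R) (C_gt0 : 0 < C) :
  let c := (1 + C * `|nu|) ^+ 2 / (2 * C) in
  let nA := inv_opnorm A (span_of phi (Omega ipH phi kappa eta)) in
  let d := 2 * nA * (1 + C * `|nu|)
           + (1 + nA * opnorm A) * inv_mgap ipH phi kappa eta * c in
  forall (delta : R) (ydelta : Y) (xad : X),
    0 < delta -> `|ydelta - ys| <= delta ->
    (forall x : X,
       (((2%:R)^-1 * `|A (W xad) - ydelta| ^+ 2)%:E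
          + (C * delta)%:E * (Reg xad + wl1 ipH phi kappa (W xad))
        <= ((2%:R)^-1 * `|A (W x) - ydelta| ^+ 2)%:E
          + (C * delta)%:E * (Reg x + wl1 ipH phi kappa (W x)))%E) ->
    (bregman ipX Reg xi xad xs <= (c * delta)%:E)%E /\
    `|W xad - W xs| <= d * delta.
Proof.
move=> c nA d delta yd xad d0 hyd hmin.
set wl := wl1 ipH phi kappa in dom_nonempty h22 h23b hmin *.
set us := W xs; set ux := W xad.
have fus : wl us \is a fin_num := subdiff_fin hipH a_gt0 kappa_ge h23b.
have wl_ge0 z : (0 <= wl z)%E := wl1_ge0 ipH phi a_gt0 kappa_ge z.
have [z0 hz0] := dom_nonempty.
have [fRz0 _] := fin_sum_ge0 (Reg_ge0 z0) (wl_ge0 _) hz0.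
have fRs : Reg xs \is a fin_num.
  have := h23a z0; rewrite -(fineK fRz0).
  move: (Reg_ge0 xs); case: (Reg xs) => //.
have al0 : 0 < C * delta by rewrite mulr_gt0.
have hm := hmin xs.
have fsum : (Reg xad + wl ux) \is a fin_num.
  apply: (@fin_of_le _ (2^-1 * `|A ux - yd| ^+ 2) (2^-1 * `|A us - yd| ^+ 2 + C * delta * (fine (Reg xs) + fine (wl us))) (C * delta)) al0 _ _.
    by rewrite adde_ge0 ?Reg_ge0 ?wl_ge0.
  by move: hm; rewrite -(fineK fRs) -(fineK fus).
have [fRx fux] : Reg xad \is a fin_num /\ wl ux \is a fin_num.
  have := fsum; rewrite fin_numElt => /andP[_ hlt].
  exact: fin_sum_ge0 (Reg_ge0 _) (wl_ge0 _) hlt.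
set Rx := fine (Reg xad); set Rs := fine (Reg xs).
set Wx := fine (wl ux); set Ws := fine (wl us).
have hmr : 2^-1 * `|A ux - yd| ^+ 2 + C * delta * (Rx + Wx) <=
           2^-1 * `|A us - yd| ^+ 2 + C * delta * (Rs + Ws).
  by move: hm; rewrite -(fineK fRs) -(fineK fus) -(fineK fRx) -(fineK fux).
have hD1 : 0 <= Rx - Rs - ipX xi (xad - xs).
  have := h23a xad; rewrite -(fineK fRs) -(fineK fRx) => h.
  have h' : Rs + ipX xi (xad - xs) <= Rx := h.
  lra.
have hD2 : 0 <= Wx - Ws - ipH eta (ux - us).
  have := h23b ux; rewrite -(fineK fus) -(fineK fux) => h.
  have h' : Ws + ipH eta (ux - us) <= Wx := h.
  lra.
have hid : ipX xi (xad - xs) + ipH eta (ux - us) = ipY (A ux - A us) nu.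
  have e1 : ipX (Wt (At nu)) (xad - xs) = ipY (A ux - A us) nu.
    by rewrite (ip_sym hipX) -hWt -hAt !linearB.
  rewrite -e1 h23c (ipDl hipX) (ip_sym hipX (Wt eta)) -hWt linearB.
  by rewrite (ip_sym hipH).
have hP0 : `|ipY (A ux - A us) nu| <= `|nu| * (`|A ux - yd| + delta).
  apply: le_trans (ip_CS hipY _ _) _; rewrite mulrC; apply: ler_wpM2l => //.
  have -> : A ux - A us = (A ux - yd) + (yd - ys) by rewrite /us h21 addrA subrK.
  by apply: le_trans (ler_normD _ _) _; rewrite lerD2l.
have hP : - (`|nu| * (`|A ux - yd| + delta)) <= ipY (A ux - A us) nu.
  have := ler_norm (- ipY (A ux - A us) nu); rewrite normrN => h; lra.
have hsq : `|A us - yd| ^+ 2 <= delta ^+ 2.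
  by rewrite /us h21 distrC ler_pXn2r ?nnegrE ?(ltW d0) ?normr_ge0.
have hkey : 2^-1 * `|A ux - yd| ^+ 2 + C * delta *
     ((Rx - Rs - ipX xi (xad - xs)) + (Wx - Ws - ipH eta (ux - us))) <=
   2^-1 * delta ^+ 2 + C * delta * `|nu| * (`|A ux - yd| + delta).
  have hPa := ler_wpM2l (ltW al0) hP.
  move: hmr hsq hid hPa; set P := ipY _ _; move=> hmr hsq hid hPa.
  have e : ipH eta (ux - us) = P - ipX xi (xad - xs) by lra.
  rewrite e; lra.
have [hK1 hK2] := key_ineq C_gt0 d0 (normr_ge0 nu) (normr_ge0 (A ux - yd))
   (addr_ge0 hD1 hD2) hkey.
have hcd : (Rx - Rs - ipX xi (xad - xs)) + (Wx - Ws - ipH eta (ux - us)) <= c * delta by [].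
split.
  rewrite /bregman -(fineK fRx) -(fineK fRs) -!EFinB lee_fin -/Rx -/Rs; lra.
have [sO [usO hsO]] := Om_seq hipH onb a_gt0 kappa_ge eta.
set h := ux - us in hD2 hcd *.
set Ph := \sum_(l <- sO) ipH (phi l) h *: phi l.
set g := h - Ph.
have sPh : span_of phi (Omega ipH phi kappa eta) Ph.
  by exists sO, (fun l => ipH (phi l) h); split => // l /hsO.
have [nA0 hnA] := inv_opnorm_prop hipH hipY onb usO hsO h24.
have [oA0 hoA] := opnorm_bound Acont.
set D2 := Wx - Ws - ipH eta h in hD2 hcd.
have im0 : 0 <= inv_mgap ipH phi kappa eta.
  rewrite /inv_mgap; case: pselect => // ex.
  have [m0 _] := mgap_prop hipH onb a_gt0 kappa_ge h23b ex.
  by rewrite div1r invr_ge0 ltW.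
have gcoef l : ipH (phi l) g = if l \notin sO then ipH (phi l) h else 0.
  rewrite /g (ipBr hipH) /Ph (phi_coef_sum hipH onb) //.
  by case: (l \in sO) => /=; rewrite ?subrr ?subr0.
have hg : `|g| <= inv_mgap ipH phi kappa eta * D2.
  apply: (l1_bound hipH onb) => s uqs.
  rewrite (eq_bigr (fun l => if l \notin sO then `|ipH (phi l) h| else 0)); last first.
    by move=> l _; rewrite gcoef; case: ifP; rewrite ?normr0.
  rewrite -big_mkcond /= -big_filter.
  set s' := [seq l <- s | l \notin sO].
  have us' : uniq s' by apply: filter_uniq.
  have ns' : forall l, l \in s' -> ~ Omega ipH phi kappa eta l.
    by move=> l; rewrite mem_filter => /andP[nl _] /hsO; rewrite (negbTE nl).
  have hh l : l \in s' -> ipH (phi l) h = ipH (phi l) ux.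
    move=> /ns' nO.
    by rewrite /h (ipBr hipH) (us_zero hipH onb a_gt0 kappa_ge h23b nO) subr0.
  have hD := D2_bound hipH onb a_gt0 kappa_ge h23b us' ns' fux.
  rewrite /inv_mgap; case: pselect => [ex|nex].
    have [m0 mle] := mgap_prop hipH onb a_gt0 kappa_ge h23b ex.
    have hm' : mgap ipH phi kappa eta * \sum_(l <- s') `|ipH (phi l) h| <= D2.
      rewrite mulr_sumr big_seq; apply: le_trans hD.
      rewrite [X in _ <= X]big_seq; apply: ler_sum => l ls; rewrite hh //.
      by apply: ler_wpM2r => //; apply: mle; exact: ns'.
    rewrite div1r -[leLHS](mulKf (lt0r_neq0 m0)); apply: ler_wpM2l => //.
    by rewrite invr_ge0 ltW.
  rewrite mul0r big1_seq // => l /andP[_ ls]; exfalso; apply: nex.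
  by exists l; exact: ns'.
set im := inv_mgap ipH phi kappa eta in im0 hg *.
set oA := opnorm A in oA0 hoA *.
have hAh : `|A h| <= `|A ux - yd| + delta.
  have -> : A h = (A ux - yd) + (yd - ys).
    have Aus : A us = ys := h21.
    by rewrite /h linearB Aus addrA subrK.
  by apply: le_trans (ler_normD _ _) _; rewrite lerD2l.
have t2 : `|g| <= im * (c * delta).
  apply: le_trans hg _; apply: ler_wpM2l => //; lra.
have hAPh : `|A Ph| <= `|A h| + oA * `|g|.
  have -> : Ph = h - g by rewrite /g opprB addrC subrK.
  rewrite linearB; apply: le_trans (ler_normB _ _) _; rewrite lerD2l; exact: hoA.
have t3 : oA * `|g| <= oA * (im * (c * delta)) := ler_wpM2l oA0 t2.
have t1 : nA * `|A Ph| <= nA * (delta * (1 + 2 * C * `|nu|) + delta + oA * (im * (c * delta))).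
  apply: ler_wpM2l => //; lra.
have hPh : `|Ph| <= nA * `|A Ph| := hnA Ph sPh.
have hh : `|h| <= `|Ph| + `|g|.
  have -> : h = Ph + g by rewrite /g addrC subrK.
  exact: ler_normD.
rewrite /d -/im -/oA; lra.
Qed.
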